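(* Let $R>0$ and $s\in\{-R,\,iR\}$. Then the Voiculescu transform of $a^{1/2}_s$ is $\phi_{a^{1/2}_s}(z)=2isz^{1/2}-s^2$; consequently $a^{1/2}_{-R}$ and $a^{1/2}_{iR}$ are freely $\tfrac12$-stable but not strictly freely stable.
   Context: For $w\in\mathbb{C}\setminus[0,\infty)$ and $p\in\{\alpha,1/\alpha\}$, $w^p:=e^{p\log_{(1)}w}$ with $\operatorname{Im}\log_{(1)}w\in(0,2\pi)$; $(-1)^{\alpha-1}:=e^{i(\alpha-1)\pi}$. For $0<\alpha\le1$ and $(1-\alpha)\pi\le\arg s\le\pi$, the monotone $\alpha$-stable law $a^\alpha_s$ is the probability measure on $\mathbb{R}$ with reciprocal Cauchy transform $F_{a^\alpha_s}(z)=1/\int\frac{a^\alpha_s(dx)}{z-x}=(z^\alpha+(-1)^{\alpha-1}s)^{1/\alpha}$ on $\mathbb{C}_+$ (so $F_{a^{1/2}_s}(z)=(z^{1/2}-is)^2$). For a probability measure $\mu$, $F_\mu=1/G_\mu$ is univalent on a truncated cone $\Gamma_{\eta,M}=\{\operatorname{Im}z>M,\ \operatorname{Im}z>\eta|\operatorname{Re}z|\}$ whose image contains another such cone; the Voiculescu transform is $\phi_\mu(z)=F_\mu^{-1}(z)-z$ on that cone. A probability measure is freely $\tfrac12$-stable iff $\phi_\mu(z)=bz^{1/2}+c$ with $c\in\mathbb{R}$ and $\arg b\in[\pi,3\pi/2]$, and strictly freely $\tfrac12$-stable iff moreover $c=0$. *)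

(* Defs.v *)
From Stdlib Require Import Reals Lra.
Open Scope R_scope.

Record Cplx := mkC { Re : R ; Im : R }.

Definition Cadd (z w : Cplx) : Cplx := mkC (Re z + Re w) (Im z + Im w).
Definition Csub (z w : Cplx) : Cplx := mkC (Re z - Re w) (Im z - Im w).
Definition Cmul (z w : Cplx) : Cplx :=
  mkC (Re z * Re w - Im z * Im w) (Re z * Im w + Im z * Re w).
Definition RtoC (x : R) : Cplx := mkC x 0.
Definition Ci : Cplx := mkC 0 1.
Definition Cmod (z : Cplx) : R := sqrt (Re z ^ 2 + Im z ^ 2).

Definition Cexpi (t : R) : Cplx := mkC (cos t) (sin t).

Definition upper (z : Cplx) : Prop := 0 < Im z.

Definition off_pos_axis (w : Cplx) : Prop := ~ (Im w = 0 /\ 0 <= Re w).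

(** The branch of the argument with values in (0, 2pi) on C \ [0,oo)
    (defined totally; only meaningful off [0,oo)). *)
Definition arg1 (w : Cplx) : R :=
  if Rle_dec 0 (Im w) then acos (Re w / Cmod w)
  else 2 * PI - acos (Re w / Cmod w).

Definition log1 (w : Cplx) : Cplx := mkC (ln (Cmod w)) (arg1 w).

Definition Cexp (z : Cplx) : Cplx := mkC (exp (Re z) * cos (Im z)) (exp (Re z) * sin (Im z)).

Definition cpow (w : Cplx) (p : R) : Cplx := Cexp (Cmul (RtoC p) (log1 w)).

(** Reciprocal Cauchy transform of the monotone alpha-stable law a^alpha_s:
    F(z) = (z^alpha + (-1)^(alpha-1) s)^(1/alpha), with (-1)^(alpha-1) := e^{i(alpha-1)pi}. *)
Definition F_monotone_stable (alpha : R) (s : Cplx) (z : Cplx) : Cplx :=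
  cpow (Cadd (cpow z alpha) (Cmul (Cexpi ((alpha - 1) * PI)) s)) (1 / alpha).

Definition cone (eta M : R) (z : Cplx) : Prop :=
  M < Im z /\ eta * Rabs (Re z) < Im z.

(** phi is the Voiculescu transform of (the reciprocal Cauchy transform) F:
    F is univalent on some truncated cone Gamma_{eta,M}, its image contains
    another truncated cone Gamma_{eta',M'}, and on the latter
    phi(z) = F^{-1}(z) - z, F^{-1} being the inverse of F restricted to Gamma_{eta,M}. *)
Definition voiculescu_transform (F : Cplx -> Cplx) (phi : Cplx -> Cplx) : Prop :=
  exists eta M eta' M' : R,
    0 < eta /\ 0 < M /\ 0 < eta' /\ 0 < M' /\
    (forall z1 z2, cone eta M z1 -> cone eta M z2 -> F z1 = F z2 -> z1 = z2) /\
    (forall z, cone eta' M' z ->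
       exists w, cone eta M w /\ F w = z /\ phi z = Csub w z).

(** Freely 1/2-stable (via the characterization of its Voiculescu transform):
    phi(z) = b z^{1/2} + c with c real and arg b in [pi, 3pi/2]. *)
Definition freely_half_stable (F : Cplx -> Cplx) : Prop :=
  exists (b : Cplx) (c : R),
    b <> RtoC 0 /\ PI <= arg1 b <= 3 * PI / 2 /\
    voiculescu_transform F (fun z => Cadd (Cmul b (cpow z (1/2))) (RtoC c)).

Definition strictly_freely_half_stable (F : Cplx -> Cplx) : Prop :=
  exists (b : Cplx),
    b <> RtoC 0 /\ PI <= arg1 b <= 3 * PI / 2 /\
    voiculescu_transform F (fun z => Cadd (Cmul b (cpow z (1/2))) (RtoC 0)).

(* Main.v *)
Require Import Defs.
From Stdlib Require Import Reals Lra Psatz FunctionalExtensionality.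
Open Scope R_scope.


Lemma Ceq (z w : Cplx) : Re z = Re w -> Im z = Im w -> z = w.
Proof. destruct z, w; simpl; intros; subst; reflexivity. Qed.

Lemma Cexp_sq z : Cmul (Cexp z) (Cexp z) = Cexp (Cmul (RtoC 2) z).
Proof.
  destruct z as [a b]; unfold Cexp, Cmul, RtoC; simpl; apply Ceq; simpl;
  replace (2 * a - 0 * b) with (a + a) by ring;
  replace (2 * b + 0 * a) with (2 * b) by ring;
  rewrite exp_plus, ?cos_2a, ?sin_2a; ring.
Qed.

Lemma Cmod_pos w : 0 < Re w ^ 2 + Im w ^ 2 -> 0 < Cmod w.
Proof. intros; unfold Cmod; apply sqrt_lt_R0; auto. Qed.

Lemma Cmod_sq w : Cmod w * Cmod w = Re w ^ 2 + Im w ^ 2.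
Proof. unfold Cmod; apply sqrt_sqrt; nra. Qed.

Lemma Cexp_log w : 0 < Re w ^ 2 + Im w ^ 2 -> Cexp (log1 w) = w.
Proof.
  intros H. pose proof (Cmod_pos w H) as Hm. pose proof (Cmod_sq w) as Hs.
  set (m := Cmod w) in *. set (a := Re w) in *. set (b := Im w) in *.
  assert (Hx : -1 <= a / m <= 1).
  { assert ((a/m)^2 <= 1).
    { replace ((a/m)^2) with (a^2 / (m*m)) by (field; lra).
      apply Rmult_le_reg_r with (m*m). nra.
      unfold Rdiv; rewrite Rmult_assoc, Rinv_l by nra. nra. }
    nra. }
  assert (Hsq : 1 - (a/m)² = (Rabs b / m) ^ 2).
  { unfold Rsqr. replace ((Rabs b / m)^2) with (Rabs b ^ 2 / (m*m)) by (field; lra).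
    rewrite pow2_abs. field_simplify; try lra.
    replace (m^2) with (m*m) by ring. rewrite Hs. field. nra. }
  assert (Hs2 : sqrt (1 - (a/m)²) = Rabs b / m).
  { rewrite Hsq. apply sqrt_pow2. unfold Rdiv; apply Rmult_le_pos; [apply Rabs_pos|left; apply Rinv_0_lt_compat; lra]. }
  unfold log1, Cexp, arg1; simpl. fold m a b. rewrite exp_ln by lra.
  destruct (Rle_dec 0 b) as [Hb|Hb]; apply Ceq; simpl; fold a b.
  - rewrite cos_acos by lra. field; lra.
  - rewrite sin_acos, Hs2 by lra. rewrite Rabs_right by lra. field; lra.
  - replace (2 * PI - acos (a/m)) with (- acos (a/m) + 2 * INR 1 * PI) by (simpl; ring).
    rewrite cos_period, cos_neg, cos_acos by lra. field; lra.
  - replace (2 * PI - acos (a/m)) with (- acos (a/m) + 2 * INR 1 * PI) by (simpl; ring).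
    rewrite sin_period, sin_neg, sin_acos, Hs2 by lra. rewrite Rabs_left by lra. field; lra.
Qed.

Lemma cpow2 w : 0 < Re w ^ 2 + Im w ^ 2 -> cpow w 2 = Cmul w w.
Proof. intros H. unfold cpow. rewrite <- Cexp_sq, Cexp_log; auto. Qed.

Lemma sq_sq w : 0 < Re w ^ 2 + Im w ^ 2 -> Cmul (cpow w (1/2)) (cpow w (1/2)) = w.
Proof.
  intros H. unfold cpow. rewrite Cexp_sq.
  rewrite <- (Cexp_log w H) at 2. f_equal.
  destruct (log1 w) as [a b]; unfold Cmul, RtoC; apply Ceq; simpl; field.
Qed.

Lemma arg1_range w : off_pos_axis w -> 0 < arg1 w < 2 * PI.
Proof.
  unfold off_pos_axis; intros Hw.
  assert (H : 0 < Re w ^ 2 + Im w ^ 2).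
  { destruct (Req_dec (Im w) 0) as [e|n]; [|nra].
    rewrite e. assert (Re w < 0) by (destruct (Rle_dec 0 (Re w)); [exfalso; tauto|lra]). nra. }
  pose proof (Cmod_pos w H) as Hm. pose proof (Cmod_sq w) as Hs.
  set (m := Cmod w) in *. set (a := Re w) in *. set (b := Im w) in *.
  assert (Hx : -1 <= a / m <= 1).
  { assert ((a/m)^2 <= 1).
    { replace ((a/m)^2) with (a^2 / (m*m)) by (field; lra).
      apply Rmult_le_reg_r with (m*m). nra.
      unfold Rdiv; rewrite Rmult_assoc, Rinv_l by nra. nra. }
    nra. }
  pose proof (acos_bound (a/m)).
  assert (N0 : acos (a/m) <> 0).
  { intro E. assert (Q1 : a/m = 1) by (rewrite <- (cos_acos (a/m)), E, cos_0 by lra; auto).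
    assert (a = m) by (replace a with ((a/m)*m) by (field; lra); rewrite Q1; ring).
    apply Hw. split; fold a b; nra. }
  assert (Npi : Im w > 0 -> acos (a/m) <> PI).
  { intros Hb E. assert (Q2 : a/m = -1) by (rewrite <- (cos_acos (a/m)), E, cos_PI by lra; auto).
    assert (a = -m) by (replace a with ((a/m)*m) by (field; lra); rewrite Q2; ring). fold b in Hb. nra. }
  unfold arg1. fold m a b. destruct (Rle_dec 0 b); split; try lra.
  all: pose proof PI_RGT_0; try lra.
Qed.

Lemma arg1_upper w : 0 < Im w -> 0 < arg1 w < PI.
Proof.
  intros Hb. assert (Hw : off_pos_axis w) by (unfold off_pos_axis; lra).
  pose proof (arg1_range w Hw).
  assert (HH : 0 < Re w ^ 2 + Im w ^ 2) by nra.
  pose proof (Cmod_pos w HH) as Hm. pose proof (Cmod_sq w) as Hs.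
  unfold arg1 in *. destruct (Rle_dec 0 (Im w)); [|lra].
  set (m := Cmod w) in *. set (a := Re w) in *. set (b := Im w) in *.
  pose proof (acos_bound (a/m)). split; [lra|].
  destruct (Req_dec (acos (a/m)) PI) as [E|]; [|lra]. exfalso.
  assert (Hx : -1 <= a / m <= 1).
  { assert ((a/m)^2 <= 1).
    { replace ((a/m)^2) with (a^2 / (m*m)) by (field; lra).
      apply Rmult_le_reg_r with (m*m). nra.
      unfold Rdiv; rewrite Rmult_assoc, Rinv_l by nra. nra. }
    nra. }
  assert (Q2 : a/m = -1) by (rewrite <- (cos_acos (a/m)), E, cos_PI by lra; auto).
  assert (a = -m) by (replace a with ((a/m)*m) by (field; lra); rewrite Q2; ring). nra.
Qed.

Lemma sq_im w : off_pos_axis w -> 0 < Im (cpow w (1/2)).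
Proof.
  intros Hw. pose proof (arg1_range w Hw).
  unfold cpow, Cexp, Cmul, RtoC; simpl.
  apply Rmult_lt_0_compat; [apply exp_pos|]. apply sin_gt_0; lra.
Qed.

Lemma sq_re w : 0 < Im w -> 0 < Re (cpow w (1/2)).
Proof.
  intros Hw. pose proof (arg1_upper w Hw).
  unfold cpow, Cexp, Cmul, RtoC; simpl.
  apply Rmult_lt_0_compat; [apply exp_pos|]. apply cos_gt_0; lra.
Qed.

Lemma sq_uniq u v : 0 < Im u -> 0 < Im v -> Cmul u u = Cmul v v -> u = v.
Proof.
  destruct u as [u1 u2], v as [v1 v2]; unfold Cmul; simpl; intros Hu Hv E.
  injection E; intros E2 E1.
  set (d1 := u1 - v1). set (d2 := u2 - v2). set (e1 := u1 + v1). set (e2 := u2 + v2).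
  assert (A : d1 * e1 - d2 * e2 = 0) by (unfold d1, d2, e1, e2; nra).
  assert (B : d1 * e2 + d2 * e1 = 0) by (unfold d1, d2, e1, e2; nra).
  assert (He : 0 < e2) by (unfold e2; lra).
  assert (H : d1 * (e1 * e1 + e2 * e2) = 0).
  { replace (d1 * (e1 * e1 + e2 * e2)) with (e1 * (d1 * e1 - d2 * e2) + e2 * (d1 * e2 + d2 * e1)) by ring.
    rewrite A, B; ring. }
  assert (D1 : d1 = 0) by (apply Rmult_integral in H; destruct H; nra).
  rewrite D1 in B. assert (d2 = 0) by nra.
  unfold d1, d2 in *. f_equal; lra.
Qed.

Lemma sq_of_sq u : 0 < Im u -> cpow (Cmul u u) (1/2) = u.
Proof.
  intros Hu. destruct u as [u1 u2]; simpl in Hu.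
  assert (Hoff : off_pos_axis (Cmul (mkC u1 u2) (mkC u1 u2))).
  { unfold off_pos_axis, Cmul; simpl. intros [A B].
    assert (u1 = 0) by nra. subst. nra. }
  apply sq_uniq; auto. apply sq_im; auto.
  rewrite sq_sq; auto. unfold off_pos_axis in Hoff.
  destruct (Req_dec (Im (Cmul (mkC u1 u2) (mkC u1 u2))) 0) as [e|n]; [|nra].
  assert (Re (Cmul (mkC u1 u2) (mkC u1 u2)) < 0) by (destruct (Rle_dec 0 (Re (Cmul (mkC u1 u2) (mkC u1 u2)))); [exfalso; tauto|lra]). nra.
Qed.

Definition sq z := cpow z (1/2).
Definition G c z := cpow (Cadd (sq z) c) 2.
Definition Winv c z := Cmul (Csub (sq z) c) (Csub (sq z) c).

Arguments cpow : simpl never.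
Arguments sq : simpl never.

Lemma G_upper c z : 0 <= Im c -> 0 < Im z -> G c z = Cmul (Cadd (sq z) c) (Cadd (sq z) c).
Proof.
  intros Hc Hz. unfold G. apply cpow2.
  pose proof (sq_im z ltac:(unfold off_pos_axis; lra)). fold (sq z) in H. destruct (sq z) as [v1 v2]; destruct c as [c1 c2]; unfold Cadd in *; simpl in *.
  pose proof (Rle_0_sqr (v1+c1)). assert (0 < (v2+c2)*(v2+c2)) by (apply Rmult_lt_0_compat; lra). unfold Rsqr in *. lra.
Qed.

Lemma G_inj c z1 z2 : 0 <= Im c -> 0 < Im z1 -> 0 < Im z2 -> G c z1 = G c z2 -> z1 = z2.
Proof.
  intros Hc H1 H2 E. rewrite !G_upper in E by auto.
  pose proof (sq_im z1 ltac:(unfold off_pos_axis; lra)).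
  pose proof (sq_im z2 ltac:(unfold off_pos_axis; lra)). fold (sq z1) (sq z2) in *.
  assert (sq z1 = sq z2).
  { destruct (sq z1), (sq z2); destruct c as [c1 c2]; unfold Cadd in *; simpl in *.
    apply sq_uniq in E; simpl; try lra. injection E; intros; apply Ceq; simpl; lra. }
  rewrite <- (sq_sq z1), <- (sq_sq z2) by nra. fold (sq z1) (sq z2). rewrite H3; auto.
Qed.

Lemma Rabs_lt2 x y : 2 * Rabs x < y -> 2 * x < y /\ - (2 * x) < y.
Proof. intros H. split. pose proof (Rle_abs x); lra. pose proof (Rle_abs (-x)); rewrite Rabs_Ropp in *; lra. Qed.

Lemma G_inv p q z : 0 <= p -> 0 <= q -> cone 2 (16 * (p+q)^2 + 16) z ->
  cone (1/2) 1 (Winv (mkC p q) z) /\ G (mkC p q) (Winv (mkC p q) z) = z.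
Proof.
  intros Hp Hq [Hz1 Hz2].
  assert (Hzi : 0 < Im z) by nra.
  pose proof (sq_re z Hzi) as Ha. pose proof (sq_im z ltac:(unfold off_pos_axis; lra)) as Hb.
  pose proof (sq_sq z ltac:(nra)) as Hu. fold (sq z) in Ha, Hb, Hu.
  unfold Winv. destruct (sq z) as [a b] eqn:Eu. simpl in Ha, Hb.
  destruct z as [z1 z2]. unfold Cmul in Hu; simpl in Hu. injection Hu; intros E2 E1.
  simpl in Hz1, Hz2. subst z1 z2.
  apply Rabs_lt2 in Hz2. destruct Hz2 as [Hz2 Hz3].
  assert (a < 2 * b) by nra. assert (b < 2 * a) by nra.
  set (C := p + q) in *.
  assert (a * a > 4 * C^2 + 4) by nra. assert (b * b > 4 * C^2 + 4) by nra.
  assert (HaC : a > 2 * C) by (unfold C in *; nra). assert (HbC : b > 2 * C) by (unfold C in *; nra).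
  unfold C in *.
  assert (V1 : a / 2 <= a - p <= a) by lra. assert (V2 : b / 2 <= b - q <= b) by lra.
  set (v1 := a - p) in *. set (v2 := b - q) in *.
  split.
  - unfold cone, Csub, Cmul; simpl. fold v1 v2.
    assert (2 * C^2 >= 0) by nra.
    assert (a * b > 8) by nra.
    split. nra.
    assert (P1 : 0 < v1) by lra. assert (P2 : 0 < v2) by lra.
    assert (v1 * v1 < 4 * v1 * v2) by nra. assert (v2 * v2 < 4 * v1 * v2) by nra.
    assert (Rabs (v1 * v1 - v2 * v2) < 4 * v1 * v2) by (apply Rabs_def1; nra). lra.
  - assert (Hs : sq (Cmul (Csub (mkC a b) (mkC p q)) (Csub (mkC a b) (mkC p q))) = Csub (mkC a b) (mkC p q))
      by (apply sq_of_sq; unfold Csub; simpl; lra).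
    rewrite G_upper, Hs; [| simpl; lra | unfold Csub, Cmul; simpl; fold v1 v2; nra].
    unfold Cmul, Cadd, Csub; simpl; apply Ceq; simpl; ring.
Qed.

Lemma F_eq s : F_monotone_stable (1/2) s = G (Cmul (mkC 0 (-1)) s).
Proof.
  apply functional_extensionality; intro z.
  unfold F_monotone_stable, G, sq.
  replace (1/(1/2)) with 2 by field. replace ((1/2 - 1)*PI) with (-(PI/2)) by field.
  unfold Cexpi. rewrite cos_neg, sin_neg, cos_PI2, sin_PI2. reflexivity.
Qed.

Lemma V p q phi : 0 <= p -> 0 <= q ->
  (forall z, 0 < Im z -> phi z = Csub (Winv (mkC p q) z) z) ->
  voiculescu_transform (G (mkC p q)) phi.
Proof.
  intros Hp Hq Hphi.
  exists (1/2), 1, 2, (16 * (p+q)^2 + 16).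
  repeat split; try lra; try nra.
  - intros z1 z2 [A _] [B _] E. apply (G_inj (mkC p q)); simpl; auto; lra.
  - intros z Hz. destruct (G_inv p q z Hp Hq Hz) as [H1 H2].
    exists (Winv (mkC p q) z). repeat split; try apply H1; auto.
    apply Hphi. destruct Hz; nra.
Qed.

Lemma Uniq p q phi : 0 <= p -> 0 <= q -> voiculescu_transform (G (mkC p q)) phi ->
  exists K, forall z, Re z = 0 -> K < Im z -> phi z = Csub (Winv (mkC p q) z) z.
Proof.
  intros Hp Hq [eta [M [eta' [M' [He [HM [He' [HM' [Hinj Hs]]]]]]]]].
  exists (M' + 16 * (p+q)^2 + 16). intros z Hr Hi.
  assert (Hc : cone eta' M' z).
  { split. nra. rewrite Hr, Rabs_R0. nra. }
  destruct (Hs z Hc) as [w [[Hw1 Hw2] [Fw Pw]]].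
  assert (Hc2 : cone 2 (16 * (p+q)^2 + 16) z).
  { split. nra. rewrite Hr, Rabs_R0. nra. }
  destruct (G_inv p q z Hp Hq Hc2) as [[A _] B].
  rewrite Pw. f_equal. apply (G_inj (mkC p q)); [simpl; lra|lra|lra|]. rewrite Fw, B; reflexivity.
Qed.

Lemma NotStrict p q b0 : 0 <= p -> 0 <= q -> 0 < p + q ->
  ~ voiculescu_transform (G (mkC p q)) (fun z => Cadd (Cmul b0 (cpow z (1/2))) (RtoC 0)).
Proof.
  intros Hp Hq Hpq Hv. destruct (Uniq p q _ Hp Hq Hv) as [K HK].
  set (y := Rabs K + 1).
  assert (Hy : 0 < y) by (unfold y; pose proof (Rabs_pos K); lra).
  assert (HyK : K < y * y + y * y) by (unfold y in *; pose proof (Rle_abs K); pose proof (Rabs_pos K); nra).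
  pose proof (HK (Cmul (mkC y y) (mkC y y)) ltac:(simpl; ring) ltac:(simpl; nra)) as E1.
  pose proof (HK (Cmul (mkC (2*y) (2*y)) (mkC (2*y) (2*y))) ltac:(simpl; ring) ltac:(simpl; nra)) as E2.
  unfold Winv, sq in E1, E2.
  rewrite sq_of_sq in E1, E2 by (simpl; lra).
  destruct b0 as [b1 b2].
  unfold Cadd, Cmul, Csub, RtoC in E1, E2; simpl in E1, E2.
  injection E1; intros A2 A1. injection E2; intros B2 B1.
  assert (p * p - q * q = 0) by nra.
  assert (Hpq0 : p * q = 0) by nra.
  destruct (Rmult_integral p q Hpq0) as [Z|Z]; rewrite Z in *; nra.
Qed.

Lemma ident s u z : Cmul u u = z ->
  Csub (Cmul (Cmul (RtoC 2) (Cmul Ci s)) u) (Cmul s s) =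
  Csub (Cmul (Csub u (Cmul (mkC 0 (-1)) s)) (Csub u (Cmul (mkC 0 (-1)) s))) z.
Proof. intros <-. destruct u, s; unfold Csub, Cmul, RtoC, Ci; apply Ceq; simpl; ring. Qed.

Theorem mainTheorem5 (Rr : R) (s : Cplx) :
  0 < Rr ->
  (s = RtoC (- Rr) \/ s = mkC 0 Rr) ->
  voiculescu_transform (F_monotone_stable (1/2) s)
    (fun z => Csub (Cmul (Cmul (RtoC 2) (Cmul Ci s)) (cpow z (1/2))) (Cmul s s))
  /\ freely_half_stable (F_monotone_stable (1/2) s)
  /\ ~ strictly_freely_half_stable (F_monotone_stable (1/2) s).
Proof.
  intros HR Hs. rewrite F_eq.
  assert (Hid : forall z, 0 < Im z ->
     Csub (Cmul (Cmul (RtoC 2) (Cmul Ci s)) (cpow z (1/2))) (Cmul s s) =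
     Csub (Winv (Cmul (mkC 0 (-1)) s) z) z).
  { intros z Hz. unfold Winv, sq. apply ident. apply sq_sq. nra. }
  destruct Hs as [Es | Es].
  - assert (Ec : Cmul (mkC 0 (-1)) s = mkC 0 Rr) by (subst; unfold Cmul, RtoC; apply Ceq; simpl; ring).
    rewrite Ec in *. split; [|split].
    + apply V; try lra. exact Hid.
    + exists (mkC 0 (-2 * Rr)), (- (Rr * Rr)). split; [|split].
      * intro E; injection E; lra.
      * unfold arg1, Cmod; cbn [Re Im]. destruct (Rle_dec 0 (-2 * Rr)); [lra|].
        unfold Rdiv. rewrite !Rmult_0_l, acos_0. pose proof PI_RGT_0. lra.
      * apply V; try lra. intros z Hz. rewrite <- Hid by auto. clear Hid.
        pose proof (sq_sq z ltac:(nra)) as Hu. unfold sq in Hu.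
        destruct (cpow z (1/2)) as [u1 u2]. subst z s.
        unfold Cadd, Csub, Cmul, RtoC, Ci; apply Ceq; simpl; ring.
    + intros [b0 [_ [_ Hv]]]. revert Hv. apply NotStrict; lra.
  - assert (Ec : Cmul (mkC 0 (-1)) s = mkC Rr 0) by (subst; unfold Cmul, RtoC; apply Ceq; simpl; ring).
    rewrite Ec in *. split; [|split].
    + apply V; try lra. exact Hid.
    + exists (mkC (-2 * Rr) 0), (Rr * Rr). split; [|split].
      * intro E; injection E; lra.
      * unfold arg1, Cmod; cbn [Re Im]. destruct (Rle_dec 0 0); [|lra].
        replace ((-2 * Rr) ^ 2 + 0 ^ 2) with ((2 * Rr) ^ 2) by ring.
        rewrite sqrt_pow2 by lra.
        replace (-2 * Rr / (2 * Rr)) with (- (1)) by (field; lra).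
        rewrite acos_opp, acos_1. pose proof PI_RGT_0. lra.
      * apply V; try lra. intros z Hz. rewrite <- Hid by auto. clear Hid.
        pose proof (sq_sq z ltac:(nra)) as Hu. unfold sq in Hu.
        destruct (cpow z (1/2)) as [u1 u2]. subst z s.
        unfold Cadd, Csub, Cmul, RtoC, Ci; apply Ceq; simpl; ring.
    + intros [b0 [_ [_ Hv]]]. revert Hv. apply NotStrict; lra.
Qed.
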